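(* Let $N\ge1$. For every $\Lambda\subseteq P_N$ and $\sigma\in S_N$, the maps $T_\Lambda$ and $R_\sigma$ are homeomorphisms of $\mathbb{D}_N$ onto itself satisfying $\pi\circ T_\Lambda=\pi$ and $\pi\circ R_\sigma=\pi$, i.e. they lie in $\mathrm{Aut}(\mathbb{D}_N)_\pi$. Furthermore, if $\mathfrak{T}_N$ and $\mathfrak{R}_N$ denote the groups generated by the $T_\Lambda$ and by the $R_\sigma$ respectively, then the set $\mathfrak{T}_N\mathfrak{R}_N$ equipped with the operation $$T_{\Lambda_1}R_{\sigma_1}\cdot T_{\Lambda_2}R_{\sigma_2}=T_{\Lambda_1\oplus\sigma_1(\Lambda_2)}R_{\sigma_1\sigma_2}\qquad(\Lambda_i\subseteq P_N,\ \sigma_i\in S_N)$$ is a group isomorphic to the outer semidirect product $\{\pm1\}^N\rtimes_\varphi S_N$ with respect to $\varphi:S_N\to\mathrm{Aut}(\{\pm1\}^N)$, $\varphi_\sigma(\varepsilon_1,\dots,\varepsilon_N)=(\varepsilon_{\sigma^{-1}(1)},\dots,\varepsilon_{\sigma^{-1}(N)})$.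
   Context: $P_N=\{1,\dots,N\}$; vectors $v\in\mathbb{C}^N$ are functions on $P_N$, $v^{-1}[S]=\{\ell:v_\ell\in S\}$; $\mathrm{Tr}(v,\Lambda):=\sum_{\ell\in\Lambda}v_\ell$; $\oplus$ is symmetric difference of sets. $\mathcal{C}:=\{z\in\mathbb{C}:\mathrm{Re}(z)>0\text{ or }z\in i\mathbb{R}_{>0}\}$. $\mathbb{D}_N:=\{(w,a,\theta)\in\mathbb{C}\times\mathbb{C}^N\times\mathbb{R}^N: a^{-1}[0]\subseteq\theta^{-1}[\mathbb{R}\smallsetminus\mathbb{Z}]\}$ (i.e. $\theta_\ell\notin\mathbb{Z}$ whenever $a_\ell=0$), with the subspace topology. $\pi:\mathbb{D}_N\to\mathbb{C}$, $\pi(w,a,\theta):=w-\mathrm{Tr}(a,a^{-1}[-\mathcal{C}])$. $\mathrm{Aut}(\mathbb{D}_N)$ is the group of homeomorphisms of $\mathbb{D}_N$ and $\mathrm{Aut}(\mathbb{D}_N)_\pi:=\{g\in\mathrm{Aut}(\mathbb{D}_N):\pi\circ g=\pi\}$. For $\Lambda\subseteq P_N$, $d(\Lambda)$ is the $N\times N$ diagonal matrix with $(\ell,\ell)$-entry $-1$ if $\ell\in\Lambda$, $1$ otherwise, and $T_\Lambda(w,a,\theta):=(w-\mathrm{Tr}(a,\Lambda),\,a\,d(\Lambda),\,\theta\,d(\Lambda))$ (row vectors). For $\sigma\in S_N$, $r(\sigma)$ is the $N\times N$ matrix whose $\ell$-th column is the $\sigma^{-1}(\ell)$-th column of the identity matrix,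 and $R_\sigma(w,a,\theta):=(w,\,a\,r(\sigma),\,\theta\,r(\sigma))$. *)

(* Defs.v *)
From HB Require Import structures.
From mathcomp Require Import all_boot all_order all_algebra all_fingroup.
From mathcomp Require Import all_classical all_reals all_analysis.
From mathcomp Require Import complex.
Set Implicit Arguments. Unset Strict Implicit. Unset Printing Implicit Defensive.
Import Order.TTheory GRing.Theory Num.Theory.
Import numFieldTopology.Exports numFieldNormedType.Exports.
Local Open Scope classical_set_scope.
Local Open Scope ring_scope.

Definition Cplx (R : realType) : numClosedFieldType := R[i].

(* Ambient space C x C^N x R^N (row vectors), product topology.
   Indices: P_N = {1,...,N} is represented by 'I_N = {0,...,N-1}. *)
Definition pt (R : realType) (N : nat) :=
  (Cplx R * 'rV[Cplx R]_N * 'rV[R]_N)%type.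

Definition pw R N (p : pt R N) : Cplx R := p.1.1.
Definition pa R N (p : pt R N) : 'rV[Cplx R]_N := p.1.2.
Definition pth R N (p : pt R N) : 'rV[R]_N := p.2.

Definition coneC (R : realType) (z : Cplx R) : Prop :=
  0 < complex.Re z \/ (complex.Re z = 0 /\ 0 < complex.Im z).

Definition Tr (K : nmodType) N (v : 'rV[K]_N) (L : {set 'I_N}) : K :=
  \sum_(l in L) v ord0 l.

Definition vpre (K : Type) N (v : 'rV[K]_N) (S : set K) : {set 'I_N} :=
  [set l : 'I_N | `[< S (v ord0 l) >]].

Definition DN (R : realType) (N : nat) : set (pt R N) :=
  [set p | forall l : 'I_N, pa p ord0 l = 0 ->
             forall k : int, pth p ord0 l != k%:~R].

Definition piD (R : realType) N (p : pt R N) : Cplx R :=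
  pw p - Tr (pa p) (vpre (pa p) [set z | coneC (- z)]).

Definition dmx (K : pzRingType) N (L : {set 'I_N}) : 'M[K]_N :=
  \matrix_(i, j) (if i == j then (if i \in L then -1 else 1) else 0).

Definition rmx (K : pzRingType) N (s : 'S_N) : 'M[K]_N :=
  \matrix_(i, j) (i == (s^-1)%g j)%:R.

Definition TL (R : realType) N (L : {set 'I_N}) (p : pt R N) : pt R N :=
  (pw p - Tr (pa p) L, pa p *m dmx _ L, pth p *m dmx _ L).

Definition Rs (R : realType) N (s : 'S_N) (p : pt R N) : pt R N :=
  (pw p, pa p *m rmx _ s, pth p *m rmx _ s).

Definition homeo_onto (T : topologicalType) (D : set T) (f : T -> T) : Prop :=
  exists g : T -> T,
    (forall x, D x -> D (f x)) /\ (forall x, D x -> D (g x)) /\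
    (forall x, D x -> g (f x) = x) /\ (forall x, D x -> f (g x) = x) /\
    {within D, continuous f} /\ {within D, continuous g}.

Definition in_Aut_pi (R : realType) N (f : pt R N -> pt R N) : Prop :=
  homeo_onto (@DN R N) f /\ (forall p, DN p -> piD (f p) = piD p).

(* equality of maps on D_N (elements of Aut(D_N) are maps D_N -> D_N) *)
Definition eqD (R : realType) N (f g : pt R N -> pt R N) : Prop :=
  forall p, DN p -> f p = g p.

Definition symdiff (T : finType) (A B : {set T}) : {set T} :=
  (A :\: B) :|: (B :\: A).

(* composition sigma1 sigma2 := sigma1 o sigma2 (mathcomp's product on
   permutations is left-to-right: (s * t) x = t (s x)) *)
Definition permcomp N (s1 s2 : 'S_N) : 'S_N := (s2 * s1)%g.

(* {+-1} coded by bool: false = +1, true = -1; multiplication = xor.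
   phi_sigma(eps)_l = eps_{sigma^{-1}(l)} *)
Definition phi N (s : 'S_N) (e : {ffun 'I_N -> bool}) : {ffun 'I_N -> bool} :=
  [ffun l => e ((s^-1)%g l)].

Definition sdp N := ({ffun 'I_N -> bool} * 'S_N)%type.
Definition sdp_mul N (x y : sdp N) : sdp N :=
  ([ffun l => x.1 l (+) phi x.2 y.1 l], permcomp x.2 y.2).

Definition pimg N (s : 'S_N) (L : {set 'I_N}) : {set 'I_N} := [set s l | l in L].

(* Main.v *)
Require Import Defs.
From HB Require Import structures.
From mathcomp Require Import all_boot all_order all_algebra all_fingroup.
From mathcomp Require Import all_classical all_reals all_analysis.
From mathcomp Require Import complex.
From mathcomp Require Import lra.
Import Order.TTheory GRing.Theory Num.Theory.
Import numFieldTopology.Exports numFieldNormedType.Exports.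
Local Open Scope ring_scope.
Local Open Scope classical_set_scope.

Lemma mx_cont_entries (T K : topologicalType) m n (f : T -> 'M[K]_(m, n)) :
  (forall i j, continuous (fun x => f x i j)) -> continuous f.
Proof.
move=> hf x A [P hP sPA].
have H : forall s : seq ('I_m * 'I_n), \forall y \near x,
    forall ij, ij \in s -> P ij.1 ij.2 (f y ij.1 ij.2).
  elim=> [|ij s IH]; first by apply: nearW => y ij; rewrite in_nil.
  have H1 : \forall y \near x, P ij.1 ij.2 (f y ij.1 ij.2).
    exact: (hf ij.1 ij.2 x (P ij.1 ij.2) (hP _ _)).
  apply: filterS (filterI H1 IH) => y [h1 h2] ij'.
  by rewrite in_cons => /orP [/eqP -> //| /h2].
apply: filterS (H (enum (@predT ([the finType of ('I_m * 'I_n)%type])))) => y hy.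
by apply: sPA => i j; apply: (hy (i, j)); rewrite mem_enum.
Qed.

Lemma mx_entry_cont (K : topologicalType) m n i j :
  continuous (fun M : 'M[K]_(m, n) => M i j).
Proof.
move=> M A hA.
pose P := fun (i' : 'I_m) (j' : 'I_n) => (if (i' == i) && (j' == j) then A else setT) : set K.
have hP : forall i' j', nbhs (M i' j') (P i' j').
  by move=> i' j'; rewrite /P; case: ifP => [/andP[/eqP -> /eqP ->] //|_]; apply: filterT.
have HH : (fun P0 : 'I_m -> 'I_n -> set K => forall i' j', nbhs (M i' j') (P0 i' j')) P by [].
exists P => //.
by move=> N /(_ i j); rewrite /P !eqxx.
Qed.

Lemma cont_fst (A B : topologicalType) : continuous (@fst A B).
Proof. by move=> x; apply: cvg_fst. Qed.
Lemma cont_snd (A B : topologicalType) : continuous (@snd A B).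
Proof. by move=> x; apply: cvg_snd. Qed.
Lemma cont_pair (T A B : topologicalType) (f : T -> A) (g : T -> B) :
  continuous f -> continuous g -> continuous (fun x => (f x, g x)).
Proof. by move=> hf hg x; apply: cvg_pair; [apply: hf|apply: hg]. Qed.

Lemma dmxE (K : pzRingType) N (a : 'rV[K]_N) L i j :
  (a *m dmx K L) i j = if j \in L then - a i j else a i j.
Proof.
rewrite mxE (bigD1 j) //= big1 ?addr0; last first.
  by move=> k /negbTE hk; rewrite /dmx mxE hk mulr0.
by rewrite /dmx mxE eqxx; case: ifP; rewrite ?mulrN1 ?mulr1.
Qed.

Lemma rmxE (K : pzRingType) N (a : 'rV[K]_N) (s : 'S_N) i j :
  (a *m rmx K s) i j = a i ((s^-1)%g j).
Proof.
rewrite mxE (bigD1 ((s^-1)%g j)) //= big1 ?addr0; last first.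
  by move=> k /negbTE hk; rewrite /rmx mxE hk mulr0.
by rewrite /rmx mxE eqxx mulr1.
Qed.

Lemma coneC_opp (R : realType) (z : Cplx R) : z != 0 ->
  (coneC (- z) <-> ~ coneC z).
Proof.
case: z => a b; rewrite /coneC /=.
move=> hz; split.
  move=> [h|[h1 h2]] [h'|[h1' h2']]; lra.
move=> h.
have [ha|ha|ha] := ltrgtP a 0; first by left; lra.
  by exfalso; apply: h; left.
subst a; right; split; first lra.
have [hb|hb|hb] := ltrgtP b 0; first lra.
  by exfalso; apply: h; right.
by subst b; rewrite eqxx in hz.
Qed.

Arguments coneC_opp {R}.

Lemma piD_TL (R : realType) N (L : {set 'I_N}) (p : pt R N) :
  piD (TL L p) = piD p.
Proof.
rewrite /piD /TL /pw /pa /=.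
set a := p.1.2.
suff H : Tr a L + Tr (a *m dmx _ L) (vpre (a *m dmx _ L) [set z | coneC (- z)])
   = Tr a (vpre a [set z | coneC (- z)]).
  by rewrite -H opprD addrA.
rewrite /Tr big_mkcond [X in _ + X]big_mkcond [RHS]big_mkcond /= -big_split /=; apply: eq_bigr => l _.
rewrite /vpre !inE dmxE.
have [->|hz] := eqVneq (a ord0 l) 0.
  by rewrite oppr0 !if_same addr0.
have E : forall x : Cplx R, [set z | coneC (- z)] x = coneC (- x) by [].
rewrite !E.
case: ifP => hl; last by rewrite add0r.
rewrite opprK.
case: (asboolP (coneC (a ord0 l))) => h1; case: (asboolP (coneC (- a ord0 l))) => h2.
- by exfalso; move/(coneC_opp _ hz): h2; apply.
- by rewrite addrN.
- by rewrite addr0.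
- by exfalso; apply: h2; apply/(coneC_opp _ hz).
Qed.

Lemma piD_Rs (R : realType) N (s : 'S_N) (p : pt R N) :
  piD (Rs s p) = piD p.
Proof.
rewrite /piD /Rs /pw /pa /=; congr (_ - _).
rewrite /Tr big_mkcond (reindex_inj (@perm_inj _ s)) /=.
rewrite [RHS]big_mkcond; apply: eq_bigr => l _; rewrite /vpre !inE !rmxE permK //.
Qed.

Lemma cont_sum (T : topologicalType) (K : numFieldType) (V : normedModType K)
  (I : Type) (s : seq I) (P : pred I) (f : I -> T -> V) :
  (forall i, continuous (f i)) -> continuous (fun x => \sum_(i <- s | P i) f i x).
Proof.
move=> hf; elim: s => [|i s IH].
  under eq_fun do rewrite big_nil; exact: cst_continuous.
under eq_fun do rewrite big_cons.
case: (P i) => //.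
by move=> x; apply: cvgD; [apply: hf| apply: IH].
Qed.

Section Cont.
Variables (R : realType) (N : nat).

Lemma cont_pw : continuous (@pw R N).
Proof. by move=> p; apply: (@continuous_comp _ _ _ fst fst); apply: cont_fst. Qed.
Lemma cont_pa : continuous (@pa R N).
Proof. by move=> p; apply: (@continuous_comp _ _ _ fst snd); [apply: cont_fst| apply: cont_snd]. Qed.
Lemma cont_pth : continuous (@pth R N).
Proof. by move=> p; apply: cont_snd. Qed.

Lemma cont_pa_e i j : continuous (fun p : pt R N => pa p i j).
Proof. by move=> p; apply: (@continuous_comp _ _ _ (@pa R N) (fun M => M i j)); [apply: cont_pa| apply: mx_entry_cont]. Qed.
Lemma cont_pth_e i j : continuous (fun p : pt R N => pth p i j).
Proof. by move=> p; apply: (@continuous_comp _ _ _ (@pth R N) (fun M => M i j)); [apply: cont_pth| apply: mx_entry_cont]. Qed.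

Lemma cont_TL L : continuous (@TL R N L).
Proof.
apply: cont_pair; first apply: cont_pair.
- move=> p; apply: (@cvgB _ _ _ _ _ (fun p => pw p) (fun p => Tr (pa p) L)).
    exact: cont_pw.
  by apply: cont_sum => l; apply: cont_pa_e.
- apply: mx_cont_entries => i j.
  under eq_fun do rewrite dmxE.
  case: (j \in L); last exact: cont_pa_e.
  by move=> p; apply: cvgN; apply: cont_pa_e.
- apply: mx_cont_entries => i j.
  under eq_fun do rewrite dmxE.
  case: (j \in L); last exact: cont_pth_e.
  by move=> p; apply: cvgN; apply: cont_pth_e.
Qed.

Lemma cont_Rs s : continuous (@Rs R N s).
Proof.
apply: cont_pair; first apply: cont_pair.
- exact: cont_pw.
- apply: mx_cont_entries => i j.
  under eq_fun do rewrite rmxE.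
  exact: cont_pa_e.
- apply: mx_cont_entries => i j.
  under eq_fun do rewrite rmxE.
  exact: cont_pth_e.
Qed.
End Cont.

Section Alg.
Variables (R : realType) (N : nat).

Lemma TLK L (p : pt R N) : TL L (TL L p) = p.
Proof.
case: p => [[w a] th]; rewrite /TL /pw /pa /pth /=; congr (_, _, _).
- rewrite /Tr -addrA -opprD -big_split /= big1 ?oppr0 ?addr0 // => l hl.
  by rewrite dmxE hl addrN.
- by apply/rowP => j; rewrite !dmxE; case: (j \in L); rewrite ?opprK.
- by apply/rowP => j; rewrite !dmxE; case: (j \in L); rewrite ?opprK.
Qed.

Lemma RsK s (p : pt R N) : Rs (s^-1)%g (Rs s p) = p.
Proof.
case: p => [[w a] th]; rewrite /Rs /pw /pa /pth /=; congr (_, _, _).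
- by apply/rowP => j; rewrite !rmxE invgK permK.
- by apply/rowP => j; rewrite !rmxE invgK permK.
Qed.

Lemma DN_TL L (p : pt R N) : DN p -> DN (TL L p).
Proof.
move=> hp l; rewrite /TL /pa /pth /= !dmxE.
case: ifP => _; last exact: hp.
move/eqP; rewrite oppr_eq0 => /eqP /hp h k.
apply/negP => /eqP /(congr1 (fun x => - x)); rewrite opprK => e.
by move: (h (- k)); rewrite e mulrNz eqxx.
Qed.

Lemma DN_Rs s (p : pt R N) : DN p -> DN (Rs s p).
Proof. by move=> hp l; rewrite /Rs /pa /pth /= !rmxE; apply: hp. Qed.
End Alg.

Section Inj.
Variables (R : realType) (N : nat).

Lemma natneq (n m : nat) : (n.+1%:R : Cplx R) != - (m.+1)%:R.
Proof. by rewrite -subr_eq0 opprK -natrD pnatr_eq0 addSn. Qed.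

Lemma TLRs_inj L1 s1 L2 s2 :
  eqD (@TL R N L1 \o Rs s1) (TL L2 \o Rs s2) -> L1 = L2 /\ s1 = s2.
Proof.
move=> H.
pose p0 : pt R N := (0, \row_(j < N) ((j : nat).+1)%:R, 0).
have hD : DN p0.
  by move=> l; rewrite /pa /= mxE => /eqP; rewrite pnatr_eq0.
have := congr1 (@pa R N) (H p0 hD); rewrite /TL /Rs /pa /= => e.
have E j : ((j \in L1) = (j \in L2)) /\ (s1^-1 j = s2^-1 j)%g.
  have := congr1 (fun M : 'rV_N => M 0 j) e; rewrite /= !dmxE !rmxE !mxE.
  case: (j \in L1); case: (j \in L2) => /eqP.
  - by rewrite eqr_opp eqr_nat eqSS => /eqP /val_inj.
  - by rewrite eq_sym (negbTE (natneq _ _)).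
  - by rewrite (negbTE (natneq _ _)).
  - by rewrite eqr_nat eqSS => /eqP /val_inj.
split.
  by apply/setP => j; case: (E j).
apply: (@invg_inj _ s1 s2); apply/permP => j; by case: (E j).
Qed.
End Inj.

Lemma pimgE N (s : 'S_N) L l : (l \in pimg s L) = ((s^-1)%g l \in L).
Proof.
by rewrite /pimg -{1}(permKV s l) mem_imset //; apply: perm_inj.
Qed.

Local Close Scope classical_set_scope.

Theorem proposition1 (R : realType) (N : nat) (hN : (0 < N)%N) :
  (forall L : {set 'I_N}, in_Aut_pi (@TL R N L)) /\
  (forall s : 'S_N, in_Aut_pi (@Rs R N s)) /\
  exists Phi : sdp N -> (pt R N -> pt R N),
    [/\ (forall x, exists L s, eqD (Phi x) (TL L \o Rs s)),
        (forall L s, exists x, eqD (Phi x) (TL L \o Rs s)),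
        (forall x y, eqD (Phi x) (Phi y) -> x = y) &
        (forall x y L1 s1 L2 s2,
           eqD (Phi x) (TL L1 \o Rs s1) -> eqD (Phi y) (TL L2 \o Rs s2) ->
           eqD (Phi (sdp_mul x y))
               (TL (symdiff L1 (pimg s1 L2)) \o Rs (permcomp s1 s2)))].
Proof.
split.
  move=> L; split; last by move=> p _; apply: piD_TL.
  exists (TL L); repeat split; try by move=> p hp; rewrite ?TLK //; apply: DN_TL.
  - exact: continuous_subspaceT (cont_TL _ _ L).
  - exact: continuous_subspaceT (cont_TL _ _ L).
split.
  move=> s; split; last by move=> p _; apply: piD_Rs.
  exists (Rs (s^-1)%g); repeat split.
  - by move=> p hp; apply: DN_Rs.
  - by move=> p hp; apply: DN_Rs.
  - by move=> p _; apply: RsK.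
  - by move=> p _; have := RsK _ _ (s^-1)%g p; rewrite invgK.
  - exact: continuous_subspaceT (cont_Rs _ _ s).
  - exact: continuous_subspaceT (cont_Rs _ _ (s^-1)%g).
pose Phi (x : sdp N) := TL [set l | x.1 l] \o @Rs R N x.2.
exists Phi; split.
- by move=> x; exists [set l | x.1 l], x.2.
- move=> L s; exists ([ffun l => l \in L], s) => p _.
  rewrite /Phi /=.
  have -> : [set l | [ffun l0 => l0 \in L] l] = L.
    by apply/setP => l; rewrite inE ffunE.
  by [].
- move=> [e1 t1] [e2 t2] /(@TLRs_inj R N) [hL hs] /=; rewrite /= in hs; subst t2.
  congr (_, _); apply/ffunP => l.
  by move/setP: hL => /(_ l); rewrite !inE.
- move=> [e1 t1] [e2 t2] L1 s1 L2 s2 /(@TLRs_inj R N) [hL1 hs1] /(@TLRs_inj R N) [hL2 hs2].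
  rewrite /= in hs1 hs2 hL1 hL2; subst t1 t2 L1 L2.
  move=> p _; rewrite /Phi /=.
  have -> : [set l | [ffun l0 => e1 l0 (+) phi s1 e2 l0] l] =
            symdiff [set l | e1 l] (pimg s1 [set l | e2 l]).
    apply/setP => l; rewrite /symdiff /phi !inE !ffunE pimgE !inE.
    by case: (e1 l); case: (e2 _).
  by [].
Qed.
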